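(* Assume $2k+1 \le n/4$. For every randomized algorithm that makes at most $n/4$ comparison queries and outputs a set of $2k+1$ elements, there exists an instance (with $n$ elements, $k$ of them corrupted) on which the probability that the output set contains the uncorrupted maximum is at most $3/4$.
   Context: Model: there are $n$ elements $x_1,\dots,x_n$, exactly $k$ of which are corrupted (unknown to the algorithm). For every pair of distinct elements the comparison graph (a tournament) specifies which one is larger. The comparison graph restricted to the $n-k$ uncorrupted elements is acyclic; comparisons involving corrupted elements may be oriented arbitrarily. The uncorrupted maximum is the uncorrupted element larger than every other uncorrupted element. An algorithm knows $n$ and $k$, may query the orientation of any pair (a comparison query), and outputs a set of elements. *)

(* Defs.v *)
From HB Require Import structures.
From mathcomp Require Import all_boot all_order all_algebra.
Set Implicit Arguments. Unset Strict Implicit. Unset Printing Implicit Defensive.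
Import Order.TTheory GRing.Theory Num.Theory.

(* Elements are 'I_n.  A comparison graph is a relation [T : rel 'I_n];
   [T x y] means "x is larger than y". *)

Definition tournament (n : nat) (T : rel 'I_n) : Prop :=
  (forall x, ~~ T x x) /\ (forall x y, x != y -> T x y = ~~ T y x).

Definition restr (n : nat) (T : rel 'I_n) (C : {set 'I_n}) : rel 'I_n :=
  fun x y => [&& x \notin C, y \notin C & T x y].

Definition acyclic_rel (n : nat) (E : rel 'I_n) : Prop :=
  forall x y, E x y -> ~~ connect E y x.

Definition instance (n k : nat) (T : rel 'I_n) (C : {set 'I_n}) : Prop :=
  [/\ tournament T, #|C| = k & acyclic_rel (restr T C)].

Definition uncorrupted_max (n : nat) (T : rel 'I_n) (C : {set 'I_n}) (x : 'I_n)
  : bool :=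
  (x \notin C) && [forall y, ((y \notin C) && (y != x)) ==> T x y].

(* Deterministic comparison-query algorithms as decision trees:
   [Query i j t1 t2] queries the orientation of pair (i,j) and continues with
   t1 if i is larger than j, with t2 otherwise; [Leaf S] outputs S. *)
Inductive dtree (n : nat) : Type :=
| Leaf of {set 'I_n}
| Query of 'I_n & 'I_n & dtree n & dtree n.

Fixpoint run (n : nat) (t : dtree n) (T : rel 'I_n) : {set 'I_n} * nat :=
  match t with
  | Leaf out => (out, 0%N)
  | Query i j t1 t2 =>
      let r := if T i j then run t1 T else run t2 T in (r.1, r.2.+1)
  end.

(* A randomized algorithm is a probability distribution P on a finite
   randomness space Omega together with a deterministic algorithm A w for each
   random outcome w. *)
Local Open Scope ring_scope.
Definition is_distr (R : realFieldType) (Omega : finType) (P : Omega -> R) : Prop :=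
  (forall w, 0 <= P w) /\ \sum_(w : Omega) P w = 1.

Definition success_prob (R : realFieldType) (n : nat) (Omega : finType)
  (P : Omega -> R) (A : Omega -> dtree n) (T : rel 'I_n) (C : {set 'I_n}) : R :=
  \sum_(w : Omega | [exists x, uncorrupted_max T C x && (x \in (run (A w) T).1)])
     P w.

(* Main.v *)
Require Import Defs.
From HB Require Import structures.
From mathcomp Require Import all_boot all_order all_algebra.
From mathcomp Require Import zify.
Import Order.TTheory GRing.Theory Num.Theory.

Definition rk (n : nat) (m : 'I_n) (x : 'I_n) : nat := if x == m then 0%N else (val x).+1.
Definition Tr (n : nat) (f : 'I_n -> nat) : rel 'I_n := fun x y => (f x < f y)%N.
Arguments Tr {n}.
Arguments rk {n}.

Lemma mono_connect (n : nat) (E : rel 'I_n) (f : 'I_n -> nat) :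
  (forall a b, E a b -> f a < f b)%N -> forall a b, connect E a b -> (f a <= f b)%N.
Proof.
move=> H a b /connectP [p pth ->]; elim: p a pth => //= c p IH a /andP[Eac pth].
exact: leq_trans (ltnW (H _ _ Eac)) (IH _ pth).
Qed.

Lemma Tr_instance (n k : nat) (f : 'I_n -> nat) (C : {set 'I_n}) :
  injective f -> #|C| = k -> instance k (Tr f) C.
Proof.
move=> finj HC; split => //.
  split; first by move=> x; rewrite /Tr ltnn.
  move=> x y xy; rewrite /Tr -leqNgt ltn_neqAle (inj_eq finj) xy.
  by [].
move=> x y Exy; apply/negP => /(@mono_connect _ _ f) H.
have : (f y <= f x)%N.
  apply: H => a b; rewrite /restr /Tr => /and3P[_ _ ->] //.
by move: Exy; rewrite /restr /Tr => /and3P[_ _ h]; rewrite leqNgt h.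
Qed.

Lemma rk_inj (n : nat) (m : 'I_n) : injective (rk m).
Proof.
move=> x y; rewrite /rk; case: (x =P m) => [->|_]; case: (y =P m) => [->|_] //.
by move=> [] /val_inj.
Qed.

Lemma val_inj' (n : nat) : injective (fun x : 'I_n => val x).
Proof. exact: val_inj. Qed.

Fixpoint touched (n : nat) (t : dtree n) (T : rel 'I_n) : seq 'I_n :=
  match t with
  | Leaf _ => [::]
  | Query i j t1 t2 => i :: j :: (if T i j then touched n t1 T else touched n t2 T)
  end.
Arguments touched {n}.

Lemma size_touched (n : nat) (t : dtree n) T : size (touched t T) = (2 * (run t T).2)%N.
Proof.
elim: t => //= i j t1 IH1 t2 IH2; case: (T i j); by rewrite ?IH1 ?IH2 mulnS.
Qed.

Lemma run_agree (n : nat) (t : dtree n) (T T' : rel 'I_n) :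
  (forall x y, x \in touched t T -> y \in touched t T -> T x y = T' x y) ->
  run t T = run t T'.
Proof.
elim: t => //= i j t1 IH1 t2 IH2 H.
rewrite -H ?inE ?eqxx ?orbT //.
case E: (T i j).
  rewrite IH1 // => x y hx hy; apply: H; rewrite !inE E ?hx ?hy ?orbT //.
rewrite IH2 // => x y hx hy; apply: H; rewrite !inE E ?hx ?hy ?orbT //.
Qed.

Lemma count_bound (n : nat) (t : dtree n) :
  (#|[set m : 'I_n | m \in (run t (Tr (rk m))).1]| <=
   size (touched t (Tr val)) + #|(run t (Tr val)).1|)%N.
Proof.
apply: leq_trans (_ : #|[set x in touched t (Tr val)] :|: (run t (Tr val)).1| <= _)%N.
  apply: subset_leq_card; apply/subsetP => m; rewrite !inE.
  case hm: (m \in touched t (Tr val)) => //= hin.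
  rewrite (@run_agree _ t (Tr val) (Tr (rk m))) //.
  move=> x y hx hy; rewrite /Tr /rk.
  have -> : (x == m) = false by apply/negbTE/eqP => E; rewrite -E hx in hm.
  by have -> : (y == m) = false by apply/negbTE/eqP => E; rewrite -E hy in hm.
rewrite cardsU; apply: leq_trans (leq_subr _ _) _.
by rewrite leq_add2r cardsE card_size.
Qed.

Definition Cm (n k : nat) (m : 'I_n) : {set 'I_n} := [set x in take k (enum [set~ m])].

Arguments Cm {n}.
Lemma Cm_card (n k : nat) (m : 'I_n) : (k < n)%N -> #|Cm k m| = k.
Proof.
move=> kn; rewrite /Cm cardsE (card_uniqP _) ?take_uniq ?enum_uniq //.
rewrite size_take -cardE cardsC1 card_ord.
case: n m kn => // n' m kn /=. case: ltnP => // h; lia.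
Qed.

Lemma Cm_notin (n k : nat) (m : 'I_n) : m \notin Cm k m.
Proof.
rewrite /Cm inE; apply/negP => /mem_take; by rewrite mem_enum !inE eqxx.
Qed.

Lemma sum_bool_card (R : realFieldType) (T : finType) (b : pred T) :
  (\sum_(m : T) ((b m)%:R : R) = (#|[set m | b m]|)%:R)%R.
Proof.
rewrite -sum1dep_card natr_sum [RHS]big_mkcond /=; apply: eq_bigr => m _.
by case: (b m).
Qed.

Local Open Scope ring_scope.

Theorem mainTheorem7 (R : realFieldType) (n k : nat) :
  (4 * (2 * k + 1) <= n)%N ->
  forall (Omega : finType) (P : Omega -> R) (A : Omega -> dtree n),
    is_distr P ->
    (forall w T C, @instance n k T C ->
       (4 * (run (A w) T).2 <= n)%N /\ #|(run (A w) T).1| = (2 * k + 1)%N) ->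
    exists T C, @instance n k T C /\
      (success_prob P A T C <= 3%:R / 4%:R)%R.
Proof.
move=> hn Omega P A [P0 P1] HA.
have n0 : (0 < n)%N by lia.
have kn : (k < n)%N by lia.
pose T (m : 'I_n) := Tr (rk m).
have inst m : instance k (T m) (Cm k m) := @Tr_instance n k (rk m) (Cm k m) (@rk_inj n m) (@Cm_card n k m kn).
have inst0 : instance k (Tr val) (Cm k (Ordinal n0)) :=
  @Tr_instance n k val _ (@val_inj' n) (@Cm_card n k _ kn).
have Hs m : success_prob P A (T m) (Cm k m) <=
    \sum_w P w * (m \in (run (A w) (T m)).1)%:R.
  rewrite /success_prob big_mkcond /=; apply: ler_sum => w _.
  case: ifP => [/existsP[x /andP[hx hin]]|_]; last by rewrite mulr_ge0 ?ler0n.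
  have xm : x = m.
    apply/eqP; apply/negPn/negP => xm.
    move: hx; rewrite /uncorrupted_max => /andP[_ /forallP /(_ m)].
    by rewrite Cm_notin eq_sym xm /= /T /Tr /rk eqxx ltn0.
  by move: hin; rewrite xm => ->; rewrite mulr1.
have Hw w : (4 * #|[set m | m \in (run (A w) (T m)).1]| <= 3 * n)%N.
  have [h1 h2] := HA w _ _ inst0.
  have := @count_bound n (A w); rewrite size_touched h2 => h3; rewrite /T; apply: leq_trans (leq_mul (leqnn 4) h3) _.
  lia.
have Hsum : \sum_m 4%:R * success_prob P A (T m) (Cm k m) <= (3 * n)%:R.
  apply: le_trans (_ : \sum_m 4%:R * \sum_w P w * (m \in (run (A w) (T m)).1)%:R <= _).
    by apply: ler_sum => m _; rewrite ler_pM2l ?Hs ?ltr0n.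
  rewrite -mulr_sumr exchange_big /=.
  under eq_bigr => w _ do rewrite -mulr_sumr (@sum_bool_card R _ (fun m => m \in (run (A w) (T m)).1)).
  rewrite mulr_sumr.
  apply: le_trans (_ : \sum_w P w * (3 * n)%:R <= _).
    apply: ler_sum => w _; rewrite mulrCA; apply: (ler_wpM2l (P0 w)).
    by have := Hw w; rewrite -(ler_nat R) natrM.
  by rewrite -mulr_suml P1 mul1r.
case: (boolP [exists m, success_prob P A (T m) (Cm k m) <= 3%:R / 4%:R]).
  by move=> /existsP[m hm]; exists (T m), (Cm k m).
move=> /existsPn H; exfalso.
have : \sum_(m : 'I_n) (3%:R : R) < \sum_m 4%:R * success_prob P A (T m) (Cm k m).
  apply: ltr_sum.
    by apply/hasP; exists (Ordinal n0); rewrite ?mem_index_enum.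
  move=> m _; have := H m; rewrite -ltNge ltr_pdivrMr ?ltr0n // mulrC //.
by rewrite sumr_const card_ord => /lt_le_trans/(_ Hsum); rewrite natrM mulr_natr ltxx.
Qed.
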